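(* Let $D$ be a finite set of $n$ training instances partitioned into $K$ disjoint nonempty clusters $D = C_1 \cup \dots \cup C_K$ with $|C_k| = n_k \ge 1$. Let $m_1,\dots,m_K > 0$ and $\lambda_1, \lambda_2 > 0$ with $m_k = \lambda_2 n_k$ for all $k$, and set $u_k = \lambda_1 m_k$. Define $v(S) = \sum_{k=1}^K u_k\, \mathbf{1}\{S \cap C_k \neq \emptyset\}$ for $S \subseteq D$. Then for every $k$ and every $i \in C_k$: (i) the Shapley value of $i$ in $(D,v)$ equals $\lambda_1\lambda_2$, independently of $k$; (ii) the Banzhaf value of $i$ in $(D,v)$ equals $\lambda_1\lambda_2\, n_k/2^{\,n_k-1}$, and the map $n_k \mapsto n_k/2^{\,n_k-1}$ is non-increasing on positive integers and strictly decreasing for $n_k \ge 2$.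
   Context: Interpretation: $m_k$ is the number of test points associated with cluster $C_k$ and $u_k$ the utility of the cluster (e.g. $\lambda_1 = 1/\sum_k m_k$ for accuracy). The Shapley value of $i$ is $\phi_i = \mathbb{E}_{\pi}[v(S_i(\pi)\cup\{i\}) - v(S_i(\pi))]$ with $\pi$ a uniformly random ordering of $D$ and $S_i(\pi)$ the players preceding $i$; the Banzhaf value is $\phi_i = 2^{-(n-1)}\sum_{S\subseteq D\setminus\{i\}}(v(S\cup\{i\})-v(S))$ where $n=|D|$. *)

(* Defs.v *)
From mathcomp Require Import all_boot all_order all_algebra all_fingroup.
Set Implicit Arguments. Unset Strict Implicit. Unset Printing Implicit Defensive.
Import Order.TTheory GRing.Theory Num.Theory.
Local Open Scope ring_scope.

Section Games.
Variables (R : realFieldType) (T : finType).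

(* An ordering of the player set T is encoded by a permutation pi of T:
   player j is placed at position enum_rank (pi j).  Uniform pi gives a
   uniform ordering.  pred_set pi i = players preceding i. *)
Definition pred_set (pi : {perm T}) (i : T) : {set T} :=
  [set j | (enum_rank (pi j) < enum_rank (pi i))%N].

Definition shapley (v : {set T} -> R) (i : T) : R :=
  (#|{perm T}|%:R)^-1 *
  \sum_(pi : {perm T}) (v (pred_set pi i :|: [set i]) - v (pred_set pi i)).

Definition banzhaf (v : {set T} -> R) (i : T) : R :=
  (2 ^+ (#|T|.-1))^-1 *
  \sum_(S : {set T} | i \notin S) (v (S :|: [set i]) - v S).

Definition cluster (K : nat) (c : T -> 'I_K) (k : 'I_K) : {set T} :=
  [set j | c j == k].

Definition cover_game (K : nat) (c : T -> 'I_K) (u : 'I_K -> R)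
  (S : {set T}) : R :=
  \sum_(k < K) u k * (S :&: cluster c k != set0)%:R.

End Games.

(* Main.v *)
Require Import Defs.
From mathcomp Require Import all_boot all_order all_algebra all_fingroup.
From mathcomp Require Import ring lra.
Set Implicit Arguments. Unset Strict Implicit. Unset Printing Implicit Defensive.
Import Order.TTheory GRing.Theory Num.Theory.
Local Open Scope ring_scope.

Section Aux.
Variables (R : realFieldType) (T : finType) (K : nat) (c : T -> 'I_K).

Lemma marg (u : 'I_K -> R) (k0 : 'I_K) (i : T) (S : {set T}) :
  c i = k0 ->
  cover_game c u (S :|: [set i]) - cover_game c u S =
  u k0 * (S :&: cluster c k0 == set0)%:R.
Proof.
move=> ci; rewrite /cover_game -sumrB (bigD1 k0) //= big1 => [|k Hk].
  have -> : (S :|: [set i]) :&: cluster c k0 != set0.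
    by apply/set0Pn; exists i; rewrite !inE eqxx ci eqxx orbT.
  rewrite addr0 -mulrBr; case: (S :&: cluster c k0 == set0) => /=; lra.
rewrite setIUl.
have -> : [set i] :&: cluster c k = set0.
  apply/setP => x; rewrite !inE; apply/negbTE; apply/andP => [[/eqP -> /eqP]].
  by rewrite ci => E; move: Hk; rewrite E eqxx.
by rewrite setU0 subrr.
Qed.

Definition first (C : {set T}) (pi : {perm T}) (j : T) :=
  pred_set pi j :&: C == set0.

Lemma swap_first (C : {set T}) pi i j : i \in C -> j \in C ->
  first C (tperm i j * pi)%g i = first C pi j.
Proof.
move=> Hi Hj.
have tC : forall x, x \in C -> tperm i j x \in C.
  by move=> x Hx; case: tpermP.
rewrite /first; apply/idP/idP => /eqP H; apply/eqP; apply/setP => x;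
  rewrite !inE; apply/negbTE; apply/andP => [[Hx Hc]].
- move/setP: H => /(_ (tperm i j x)); rewrite !inE !permM tpermK tpermL Hx tC //.
- move/setP: H => /(_ (tperm i j x)); rewrite !inE tC // andbT.
  by move: Hx; rewrite !permM tpermL => ->.
Qed.

Lemma first_unique (C : {set T}) pi i : i \in C ->
  \sum_(j in C) ((first C pi j)%:R : R) = 1.
Proof.
move=> Hi.
case: (arg_minnP (fun j => val (enum_rank (pi j))) Hi) => j0 Hj0 Hmin.
have E : forall j, j \in C -> first C pi j = (j == j0).
  move=> j Hj; rewrite /first; case: (eqVneq j j0) => [->|ne].
    apply/eqP/setP => x; rewrite !inE; apply/negbTE; apply/andP => [[Hx Hc]].
    by move: (Hmin x Hc); rewrite leqNgt Hx.
  have Hj0' : j0 \in C := Hj0.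
  apply/negbTE/set0Pn; exists j0; rewrite !inE Hj0' andbT.
  rewrite ltn_neqAle Hmin // andbT; apply/negP => /eqP E; move/eqP: ne; apply.
  by apply: (@perm_inj _ pi); apply: enum_rank_inj; apply: val_inj.
rewrite (eq_bigr (fun j => ((j == j0) : nat)%:R)); last by move=> j Hj; rewrite E.
rewrite (bigD1 j0) //= eqxx big1 ?addr0 // => j /andP[_ /negbTE ->] //.
Qed.

Lemma count_first (C : {set T}) i : i \in C ->
  #|C|%:R * \sum_(pi : {perm T}) ((first C pi i)%:R : R) = #|{perm T}|%:R.
Proof.
move=> Hi.
have HS : forall j, j \in C -> \sum_(pi : {perm T}) ((first C pi i)%:R : R)
   = \sum_(pi : {perm T}) (first C pi j)%:R.
  move=> j Hj; rewrite (reindex_inj (mulgI (tperm i j))) /=.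
  by apply: eq_bigr => pi _; rewrite swap_first.
rewrite mulr_natl -sumr_const.
rewrite (eq_bigr (fun j => \sum_(pi : {perm T}) ((first C pi j)%:R : R))) //.
rewrite exchange_big /=.
rewrite (eq_bigr (fun _ => 1)); last by move=> pi _; exact: (first_unique _ Hi).
by rewrite sumr_const.
Qed.

Lemma count_banz (C : {set T}) i : i \in C ->
  \sum_(S : {set T} | i \notin S) ((S :&: C == set0)%:R : R) = 2 ^+ #|~: C|.
Proof.
move=> Hi.
transitivity (\sum_(S in powerset (~: C)) (1 : R)); last first.
  by rewrite sumr_const card_powerset natrX.
rewrite big_mkcond [RHS]big_mkcond; apply: eq_bigr => S _.
rewrite powersetE -disjoints_subset -setI_eq0.
case: (boolP (S :&: C == set0)) => H; last by case: ifP.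
have -> : i \notin S.
  apply/negP => iS; move/eqP/setP: H => /(_ i); rewrite !inE iS Hi //.
by [].
Qed.

End Aux.

Definition fr (R : realFieldType) (n : nat) : R := n%:R / 2 ^+ (n - 1).

Lemma fr_step (R : realFieldType) n : fr R n.+2 <= fr R n.+1.
Proof.
rewrite /fr !subSS subn0 subn0 exprS invfM.
have hp : 0 < (2 ^+ n : R) ^-1 by rewrite invr_gt0 exprn_gt0.
rewrite mulrA ler_pM2r //.
have : 0 <= (n%:R : R) by [].
rewrite ?ler_pdivrMr ?ltr_pdivrMr ?ltr0n // -!natr1 ?add0r; lra.
Qed.

Lemma fr_stepS (R : realFieldType) n : fr R n.+3 < fr R n.+2.
Proof.
rewrite /fr !subSS subn0 exprS invfM.
have hp : 0 < (2 ^+ n.+1 : R) ^-1 by rewrite invr_gt0 exprn_gt0.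
rewrite mulrA ltr_pM2r //.
have : 0 <= (n%:R : R) by [].
rewrite ?ler_pdivrMr ?ltr_pdivrMr ?ltr0n // -!natr1 ?add0r; lra.
Qed.

Lemma fr_mono (R : realFieldType) a d : (1 <= a)%N -> fr R (a + d) <= fr R a.
Proof.
case: a => // a _; elim: d => [|d IH]; first by rewrite addn0.
by apply: le_trans IH; rewrite addnS addSn; apply: fr_step.
Qed.

Theorem mainTheorem3 (R : realFieldType) (T : finType) (K : nat)
  (c : T -> 'I_K) (m : 'I_K -> R) (lam1 lam2 : R) :
  (forall k : 'I_K, exists j : T, c j = k) ->
  (forall k : 'I_K, 0 < m k) ->
  0 < lam1 -> 0 < lam2 ->
  (forall k : 'I_K, m k = lam2 * #|cluster c k|%:R) ->
  let v := cover_game c (fun k => lam1 * m k) in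
  forall (k : 'I_K) (i : T), i \in cluster c k ->
    shapley v i = lam1 * lam2 /\
    banzhaf v i = lam1 * lam2 * (#|cluster c k|%:R / 2 ^+ (#|cluster c k| - 1)) /\
    (forall a b : nat, (1 <= a)%N -> (a <= b)%N ->
       (b%:R / 2 ^+ (b - 1) : R) <= a%:R / 2 ^+ (a - 1)) /\
    (forall a b : nat, (2 <= a)%N -> (a < b)%N ->
       (b%:R / 2 ^+ (b - 1) : R) < a%:R / 2 ^+ (a - 1)).
Proof.
move=> Hne Hm l1 l2 Hmk v k i Hi.
have ci : c i = k by move: Hi; rewrite inE => /eqP.
have Hmarg : forall S, v (S :|: [set i]) - v S =
   lam1 * m k * (S :&: cluster c k == set0)%:R.
  by move=> S; rewrite /v (@marg R T K c _ k i S ci).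
have n0 : (#|cluster c k|%:R : R) != 0.
  by rewrite pnatr_eq0 -lt0n card_gt0; apply/set0Pn; exists i.
split.
  rewrite /shapley (eq_bigr (fun pi => lam1 * m k * (first (cluster c k) pi i)%:R));
    last by move=> pi _; rewrite Hmarg.
  rewrite -mulr_sumr.
  have Hc := count_first R Hi.
  set s := \sum_pi _ in Hc *.
  have N0 : (#|{perm T}|%:R : R) != 0.
    by rewrite pnatr_eq0 -lt0n; apply/card_gt0P; exists 1%g.
  have -> : s = #|{perm T}|%:R / #|cluster c k|%:R by rewrite -Hc [_ * s]mulrC mulfK.
  rewrite Hmk; field; by apply/andP.
split.
  rewrite /banzhaf (eq_bigr (fun S => lam1 * m k * (S :&: cluster c k == set0)%:R));
    last by move=> S _; rewrite Hmarg.
  rewrite -mulr_sumr count_banz // Hmk.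
  have n1 : (0 < #|cluster c k|)%N by rewrite card_gt0; apply/set0Pn; exists i.
  rewrite -(cardsC (cluster c k)) -subn1 addnC -addnBA // addnC exprD.
  have h1 : (2 ^+ (#|cluster c k| - 1) : R) != 0 by rewrite expf_neq0 // pnatr_eq0.
  have h2 : (2 ^+ #|~: cluster c k| : R) != 0 by rewrite expf_neq0 // pnatr_eq0.
  field; by rewrite h1 h2.
split.
  move=> a b ha hab; have := fr_mono R (b - a) ha; rewrite subnKC //.
move=> a b ha hab.
apply: (le_lt_trans (y := fr R a.+1)).
  by have := fr_mono R (b - a.+1) (isT : (1 <= a.+1)%N); rewrite subnKC.
by case: a ha hab => [|[|a]] //= _ _; exact: fr_stepS.
Qed.
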